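(* Let $(S,M)$ be a surface with marked points and empty boundary, and let $T$ be an ideal triangulation of $(S,M)$ such that at each puncture there are at least three incident arcs of $T$ (an arc with both ends at the same puncture counted twice). Let $Q$ be the adjacency quiver of $T$ and let $f,g:Q_1\to Q_1$ be the maps defined below. Then: (a) the $f$-orbits on $Q_1$ all have size $3$, and they are in one-to-one correspondence with the triangles of $T$; (b) the $g$-orbits on $Q_1$ all have size at least $3$, and they are in one-to-one correspondence with the punctures.
   Context: $(S,M)$: $S$ compact, connected, oriented surface without boundary, $M$ a finite non-empty set of punctures. The adjacency quiver $Q$ has the arcs of $T$ as vertices and an arrow $i\to j$ for each puncture $p$ and each occurrence of arcs $i,j$ incident to $p$ with $j$ immediately following $i$ in counterclockwise order around $p$; such an arrow corresponds to a corner at $p$ of a triangle of $T$ with sides $i$ and $j$. For an arrow $\alpha:i\to j$ at puncture $p$, let $q$ be the puncture at the other end of $j$ (the end of $j$ not used by this corner) and $k$ the third side of that triangle, which follows $j$ counterclockwise around $q$; define $f(\alpha)$ to be the arrow $j\to k$ at $q$. Define $g(\alpha)$ to be the arrow $j\to \ell$ at $p$, where $\ell$ is the arc immediately following $j$ in counterclockwise order around $p$. The $f$-orbit (resp. $g$-orbit) of $\alpha$ is $\{f^m(\alpha):m\in\mathbb{Z}\}$ (resp. $\{g^m(\alpha):m\in\mathbb{Z}\}$). *)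

(* Defs.v *)
From mathcomp Require Import all_boot.
Set Implicit Arguments. Unset Strict Implicit. Unset Printing Implicit Defensive.

(* Combinatorial model of an ideal triangulation T of a closed oriented
   surface (S,M), M = punctures, obtained by gluing triangles.
   - Tr : finType            the triangles of T.
   - a "slot" (t,k) : Tr * 'I_3.  Triangle t has vertices v_0,v_1,v_2 in
     counterclockwise order.  (t,k) denotes simultaneously
       * the side k of t, running from v_k to v_(k+1) (boundary orientation),
       * the vertex v_k of t,
       * the corner of t at v_k (between sides k-1 and k).
   - iota : side -> side     the gluing of sides: side s is glued to side
     iota s, orientation reversingly (start of s = end of iota s).
     iota is a fixed-point-free involution (no boundary).
   The arcs of T are the pairs {s, iota s}; the punctures are the classes of
   triangle vertices under the identifications induced by the gluing. *)

Section Triangulation.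
Variable Tr : finType.
Notation slot := (Tr * 'I_3)%type.
Variable iota : slot -> slot.

Definition vstart (s : slot) : slot := s.
Definition vend (s : slot) : slot := (s.1, ordS s.2).

Definition vglue : rel slot := fun x y =>
  [exists s : slot, ((x == vstart s) && (y == vend (iota s)))
                 || ((x == vend s) && (y == vstart (iota s)))].

Definition same_puncture (x y : slot) : bool := connect vglue x y.

(* valence of the puncture of vertex v: number of arc-ends at it.  The end of
   the arc {s, iota s} located at vstart s (= vend (iota s)) is represented by
   the side s; loops are thus counted twice. *)
Definition valence (v : slot) : nat :=
  #|[set s : slot | same_puncture (vstart s) v]|.

Definition arc_of (s : slot) : {set slot} := [set s; iota s].

Definition tri_adj : rel Tr := fun t t' => [exists k : 'I_3, (iota (t, k)).1 == t'].

Definition is_triangulation : Prop :=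
  [/\ 0 < #|Tr|,
      (forall s, iota (iota s) = s),
      (forall s, iota s != s) &
      (forall t t', connect tri_adj t t')].  (* S connected *)

(* Arrows of the adjacency quiver Q: one per corner (t,k) at the puncture of
   v_k; counterclockwise around v_k, side k is immediately followed by side
   k-1, so the arrow goes i -> j with i = arc of side k, j = arc of side k-1. *)
Definition Q1 := slot.
Definition puncture_of (a : Q1) : slot := a.
Definition triangle_of (a : Q1) : Tr := a.1.
Definition qsource (a : Q1) : {set slot} := arc_of a.
Definition qtarget (a : Q1) : {set slot} := arc_of (a.1, ord_pred a.2).

(* f(alpha): alpha = (t,k) : i -> j at p = v_k.  j is side k-1 of t, whose
   other end is q = v_(k-1); the third side of t is side k-2 = k+1, which
   follows j counterclockwise around q; the corresponding arrow j -> k at q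
   is the corner (t, k-1). *)
Definition fmap (a : Q1) : Q1 := (a.1, ord_pred a.2).

(* g(alpha): the arrow j -> l at p, l following j ccw around p.  It is the
   corner at p of the triangle on the other side of j, i.e. the corner whose
   first side is the side glued to side k-1 of t. *)
Definition gmap (a : Q1) : Q1 := iota (a.1, ord_pred a.2).

End Triangulation.

(* Main.v *)
Require Import Defs.
From mathcomp Require Import all_boot.

Lemma fmap_fc (Tr : finType) (a b : Tr * 'I_3) :
  fconnect (@fmap Tr) a b = (a.1 == b.1).
Proof.
apply/idP/idP.
  move=> H; apply/eqP; apply: (fconnect_invariant (k := fun x : Tr * 'I_3 => x.1)) H.
  by move=> x; rewrite /invariant /= eqxx.
case: a b => t [[|[|[|k]]] Hk] // [t' [[|[|[|k']]] Hk']] //= /eqP <-;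
  [ pose n := 0 | pose n := 2 | pose n := 1
  | pose n := 1 | pose n := 0 | pose n := 2
  | pose n := 2 | pose n := 1 | pose n := 0 ];
  (have -> : forall x, fconnect (@fmap Tr) x = fconnect (@fmap Tr) x by []);
  match goal with |- is_true (fconnect _ ?a ?b) =>
    have E : iter n (@fmap Tr) a = b by rewrite /n /=; congr pair; apply: val_inj
  end; rewrite -E; apply: fconnect_iter.
Qed.

Theorem lemma2p3 (Tr : finType) (iota : Tr * 'I_3 -> Tr * 'I_3) :
  is_triangulation iota ->
  (forall v : Tr * 'I_3, 3 <= valence iota v) ->
  (* (a) f-orbits have size 3 and correspond bijectively to triangles *)
  ((forall a : Q1 Tr, order (@fmap Tr) a = 3) /\
   (forall a b : Q1 Tr, fconnect (@fmap Tr) a b = (triangle_of a == triangle_of b)) /\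
   (forall t : Tr, exists a : Q1 Tr, triangle_of a = t)) /\
  (* (b) g-orbits have size >= 3 and correspond bijectively to punctures *)
  ((forall a : Q1 Tr, 3 <= order (gmap iota) a) /\
   (forall a b : Q1 Tr,
      fconnect (gmap iota) a b = same_puncture iota (puncture_of a) (puncture_of b)) /\
   (forall v : Tr * 'I_3, exists a : Q1 Tr, same_puncture iota (puncture_of a) v)).
Proof.
case=> _ invol _ _ Hval.
have ginj : injective (gmap iota).
  move=> [t k] [t' k'] /(can_inj invol (f := iota)) [-> H]; congr pair; apply: (@ord_pred_inj 3); exact: val_inj.
have Heq : forall a b, fconnect (gmap iota) a b = same_puncture iota a b.
  move=> a b; apply/idP/idP.
    apply: connect_sub => x _ /eqP <-.
    apply: connect1; apply/existsP; exists (x.1, ord_pred x.2).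
    by apply/orP; right; rewrite /vend /vstart /= ord_predK -surjective_pairing /gmap !eqxx.
  apply: connect_sub => x y /existsP [s /orP [] /andP [/eqP -> /eqP ->]].
    rewrite fconnect_sym //; apply: connect1; apply/eqP.
    by rewrite /gmap /vend /vstart /= ordSK -surjective_pairing invol.
  apply: connect1; apply/eqP; rewrite /gmap /vend /vstart /= ordSK.
  by rewrite -surjective_pairing.
split; [split; [|split] | split; [|split]].
- move=> a; rewrite /order.
  pose sq : seq (Tr * 'I_3) := [:: (a.1, ord0); (a.1, inord 1); (a.1, inord 2)].
  rewrite (@eq_card _ _ (mem sq)).
    apply/card_uniqP; rewrite /= !inE !xpair_eqE eqxx /=.
    by rewrite -!val_eqE /= !inordK.
  move=> b; rewrite inE fmap_fc /sq !inE.
  case: b => t [[|[|[|k]]] Hk] //=; rewrite !xpair_eqE (eq_sym t);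
    case: (a.1 == t); rewrite //= -!val_eqE /= ?inordK //.
- by move=> a b; rewrite fmap_fc.
- by move=> t; exists (t, ord0).
- move=> a; apply: leq_trans (Hval a) _; rewrite /order /valence.
  apply: subset_leq_card; apply/subsetP => s; rewrite !inE => H.
  by rewrite Heq; rewrite -Heq fconnect_sym // Heq in H.
- by move=> a b; rewrite Heq.
- by move=> v; exists v; apply: connect0.
Qed.
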